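(* For any finite multisets of formulas $\Pi$ and $\Sigma$, the inference rule $\mathsf{wk}_{\Pi,\Sigma}$: from $\Gamma\Rightarrow\Delta$ infer $\Pi,\Gamma\Rightarrow\Delta,\Sigma$ (for arbitrary $\Gamma,\Delta$) is strongly admissible in $\mathsf{Grz}_\infty+\mathsf{cut}$.
   Context: Formulas are built from $\bot$ and atoms by $\to$ and $\Box$; sequents $\Gamma\Rightarrow\Delta$ have finite multisets of formulas on each side; $\Box\Pi$ denotes $\{\Box B:B\in\Pi\}$. The calculus $\mathsf{Grz}_\infty+\mathsf{cut}$ has initial sequents $\Gamma,p\Rightarrow p,\Delta$ ($p$ atomic), $\Gamma,\bot\Rightarrow\Delta$, and rules $(\to_L)$ from $\Gamma,B\Rightarrow\Delta$ and $\Gamma\Rightarrow A,\Delta$ infer $\Gamma,A\to B\Rightarrow\Delta$; $(\to_R)$ from $\Gamma,A\Rightarrow B,\Delta$ infer $\Gamma\Rightarrow A\to B,\Delta$; $(\mathsf{refl})$ from $\Gamma,B,\Box B\Rightarrow\Delta$ infer $\Gamma,\Box B\Rightarrow\Delta$; $(\Box)$ from left premise $\Gamma,\Box\Pi\Rightarrow A,\Delta$ and right premise $\Box\Pi\Rightarrow A$ infer $\Gamma,\Box\Pi\Rightarrow\Box A,\Delta$; $(\mathsf{cut})$ from $\Gamma\Rightarrow A,\Delta$ and $\Gamma,A\Rightarrow\Delta$ infer $\Gamma\Rightarrow\Delta$. An $\infty$-proof is a possibly infinite tree of sequents built by these rules with leaves labelled by initial sequents, in which every infinite branch passes through a right premise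 of $(\Box)$ infinitely often; $\mathcal P$ is the set of all $\infty$-proofs. The $n$-fragment of an $\infty$-proof is the finite tree obtained by cutting every branch at the $n$-th (from the root) right premise of $(\Box)$; the main fragment is the $1$-fragment; the local height $|\pi|$ is the length of the longest branch of the main fragment (an $\infty$-proof consisting only of an initial sequent has height $0$). Write $\pi\sim_n\tau$ if the $n$-fragments of $\pi,\tau$ coincide, and $\pi\sim_0\tau$ always. $\mathcal P_n$ is the set of $\infty$-proofs with no application of $(\mathsf{cut})$ in their $n$-fragment, and $\mathcal P_0=\mathcal P$. A single-premise rule is strongly admissible in $\mathsf{Grz}_\infty+\mathsf{cut}$ if there is a mapping $\mathsf u:\mathcal P\to\mathcal P$ such that: (i) $\mathsf u$ is non-expansive: $\pi\sim_n\pi'$ implies $\mathsf u(\pi)\sim_n\mathsf u(\pi')$ for all $n$; (ii) $\mathsf u$ is adequate: $\pi\in\mathcal P_n$ implies $\mathsf u(\pi)\in\mathcal P_n$ for all $n$; (iii) $|\mathsf u(\pi)|\le|\pi|$ for all $\pi\in\mathcal P$; (iv) for every instance of the rule, $\mathsf u$ maps every $\infty$-proof of its premise to an $\infty$-proof of its conclusion. *)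

(* Defs.v *)
From HB Require Import structures.
From mathcomp Require Import all_boot.
From mathcomp Require Import finmap multiset.

Set Implicit Arguments.
Unset Strict Implicit.
Unset Printing Implicit Defensive.

Local Open Scope mset_scope.

Inductive formula : Type :=
| Bot : formula
| Atom : nat -> formula
| Imp : formula -> formula -> formula
| Box : formula -> formula.

Fixpoint formula_enc (A : formula) : GenTree.tree nat :=
  match A with
  | Bot => GenTree.Node 0 [::]
  | Atom p => GenTree.Leaf p
  | Imp A B => GenTree.Node 1 [:: formula_enc A; formula_enc B]
  | Box A => GenTree.Node 2 [:: formula_enc A]
  end.

Fixpoint formula_dec (t : GenTree.tree nat) : option formula :=
  match t with
  | GenTree.Leaf p => Some (Atom p)
  | GenTree.Node 0 [::] => Some Bot
  | GenTree.Node 1 [:: a; b] =>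
      match formula_dec a, formula_dec b with
      | Some A, Some B => Some (Imp A B)
      | _, _ => None
      end
  | GenTree.Node 2 [:: a] =>
      match formula_dec a with Some A => Some (Box A) | None => None end
  | _ => None
  end.

Lemma formula_encK : pcancel formula_enc formula_dec.
Proof. by elim=> //= [A -> B ->|A ->]. Qed.

HB.instance Definition _ := Countable.copy formula (pcan_type formula_encK).

Definition fmset := {mset formula}.
Definition sequent : Type := (fmset * fmset)%type.

Definition mbox (Pi : fmset) : fmset := seq_mset [seq Box B | B <- enum_mset Pi].

Inductive rtag : Type := RAxAt | RAxBot | RImpL | RImpR | RRefl | RBox | RCut.

(* [rule_inst r prem concl]: the list of premises [prem] and conclusion [concl]
   form an instance of the rule [r] (premises in the order of the paper;
   for (Box) the left premise is first and the right premise second). *)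
Definition rule_inst (r : rtag) (prem : seq sequent) (concl : sequent) : Prop :=
  match r with
  | RAxAt => prem = [::] /\
      exists (G D : fmset) (p : nat),
        concl = (Atom p +` G, Atom p +` D)
  | RAxBot => prem = [::] /\
      exists G D : fmset, concl = (Bot +` G, D)
  | RImpL => exists (G D : fmset) (A B : formula),
      prem = [:: (B +` G, D); (G, A +` D)] /\ concl = (Imp A B +` G, D)
  | RImpR => exists (G D : fmset) (A B : formula),
      prem = [:: (A +` G, B +` D)] /\ concl = (G, Imp A B +` D)
  | RRefl => exists (G D : fmset) (B : formula),
      prem = [:: (B +` (Box B +` G), D)] /\ concl = (Box B +` G, D)
  | RBox => exists (G D Pi : fmset) (A : formula),
      prem = [:: (G `+` mbox Pi, A +` D); (mbox Pi, [mset A])] /\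
      concl = (G `+` mbox Pi, Box A +` D)
  | RCut => exists (G D : fmset) (A : formula),
      prem = [:: (G, A +` D); (A +` G, D)] /\ concl = (G, D)
  end.

CoInductive ptree : Type :=
| PNode : sequent -> rtag -> seq ptree -> ptree.

Definition seqt (t : ptree) : sequent := let: PNode s _ _ := t in s.
Definition tagt (t : ptree) : rtag := let: PNode _ r _ := t in r.
Definition kids (t : ptree) : seq ptree := let: PNode _ _ ch := t in ch.

Definition dflt_tree : ptree := PNode (mset0, mset0) RAxBot [::].

Definition rprem (r : rtag) (i : nat) : bool :=
  if r is RBox then i == 1 else false.

CoInductive loc_correct : ptree -> Prop :=
| LocCorrect s r ch :
    rule_inst r [seq seqt c | c <- ch] s ->
    (forall i, i < size ch -> loc_correct (nth dflt_tree ch i)) ->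
    loc_correct (PNode s r ch).

(* infinite branches: f k is the k-th node, d k the index of the premise taken *)
Definition is_branch (t : ptree) (f : nat -> ptree) (d : nat -> nat) : Prop :=
  f 0 = t /\
  forall k, d k < size (kids (f k)) /\ f k.+1 = nth dflt_tree (kids (f k)) (d k).

Definition branch_cond (t : ptree) : Prop :=
  forall f d, is_branch t f d ->
  forall N, exists k, N <= k /\ rprem (tagt (f k)) (d k).

Definition inf_proof (t : ptree) : Prop := loc_correct t /\ branch_cond t.

(* [frag_eq n t t']: the n-fragments of t and t' coincide, the n-fragment being
   obtained by cutting every branch at the n-th right premise of (Box)
   (that node is kept as a leaf, labelled by its sequent only);
   frag_eq 0 always holds. *)
CoInductive frag_eq : nat -> ptree -> ptree -> Prop :=
| FragEq0 t t' : frag_eq 0 t t'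
| FragEqS n s r ch ch' :
    size ch = size ch' ->
    (forall i, i < size ch ->
       seqt (nth dflt_tree ch i) = seqt (nth dflt_tree ch' i)) ->
    (forall i, i < size ch ->
       frag_eq (if rprem r i then n else n.+1)
               (nth dflt_tree ch i) (nth dflt_tree ch' i)) ->
    frag_eq n.+1 (PNode s r ch) (PNode s r ch').

CoInductive no_cut : nat -> ptree -> Prop :=
| NoCut0 t : no_cut 0 t
| NoCutS n s r ch :
    r <> RCut ->
    (forall i, i < size ch ->
       no_cut (if rprem r i then n else n.+1) (nth dflt_tree ch i)) ->
    no_cut n.+1 (PNode s r ch).

Definition P_n (n : nat) (t : ptree) : Prop := inf_proof t /\ no_cut n t.

(* [lheight_le k t]: every branch of the main fragment of t has length <= k,
   i.e. the local height |t| is at most k. *)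
Fixpoint lheight_le (k : nat) (t : ptree) : Prop :=
  match k with
  | 0 => kids t = [::]
  | k'.+1 => forall i, i < size (kids t) ->
      rprem (tagt t) i \/ lheight_le k' (nth dflt_tree (kids t) i)
  end.

Definition lheight_leq (u t : ptree) : Prop :=
  forall k, lheight_le k t -> lheight_le k u.

Definition strongly_admissible (R : sequent -> sequent -> Prop) : Prop :=
  exists u : ptree -> ptree,
    (forall pi, inf_proof pi -> inf_proof (u pi)) /\
    (forall n pi pi', inf_proof pi -> inf_proof pi' ->
       frag_eq n pi pi' -> frag_eq n (u pi) (u pi')) /\
    (forall n pi, P_n n pi -> P_n n (u pi)) /\
    (forall pi, inf_proof pi -> lheight_leq (u pi) pi) /\
    (forall prem concl pi, R prem concl -> inf_proof pi -> seqt pi = prem ->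
       seqt (u pi) = concl).

Definition wk_rule (Pi Sigma : fmset) (prem concl : sequent) : Prop :=
  exists G D : fmset, prem = (G, D) /\ concl = (Pi `+` G, D `+` Sigma).

(* Main.v *)
Require Import Defs.
From mathcomp Require Import all_boot.
From mathcomp Require Import finmap multiset.
From mathcomp Require Import zify.

Local Open Scope mset_scope.

Section W.
Variables Pi Sigma : fmset.
Definition wseq (s : sequent) : sequent := (Pi `+` s.1, s.2 `+` Sigma).
CoFixpoint wk (t : ptree) : ptree :=
  match t with PNode s r ch =>
    PNode (wseq s) r
      (match ch with
       | [::] => [::]
       | [:: c1] => [:: wk c1]
       | c1 :: c2 :: rest => wk c1 :: (if r is RBox then c2 else wk c2) :: rest
       end)
  end.

Definition wkid (b : bool) (c : ptree) := if b then c else wk c.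
Lemma wkidT c : wkid true c = c. Proof. by []. Qed.
Lemma wkidF c : wkid false c = wk c. Proof. by []. Qed.

Definition wkids (r : rtag) (ch : seq ptree) : seq ptree :=
  match ch with
  | [::] => [::]
  | [:: c1] => [:: wk c1]
  | c1 :: c2 :: rest => wk c1 :: (if r is RBox then c2 else wk c2) :: rest
  end.

Lemma frob (t : ptree) : t = match t with PNode s r ch => PNode s r ch end.
Proof. by case: t. Qed.

Lemma wk_eq s r ch : wk (PNode s r ch) = PNode (wseq s) r (wkids r ch).
Proof. by rewrite [wk _]frob. Qed.

Lemma size_wkids r ch : size (wkids r ch) = size ch.
Proof. by case: ch => [|c1 [|c2 rest]] //=; case: r. Qed.

Lemma nth_wkids r ch i : i < size ch ->
  nth dflt_tree (wkids r ch) i =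
  wkid (rprem r i || (1 < i)) (nth dflt_tree ch i).
Proof.
by case: ch => [|c1 [|c2 rest]] //=; case: i => [|[|i]] //=; case: r.
Qed.

Lemma seqt_wk t : seqt (wk t) = wseq (seqt t).
Proof. by case: t => s r ch; rewrite wk_eq. Qed.

Lemma tagt_wk t : tagt (wk t) = tagt t.
Proof. by case: t => s r ch; rewrite wk_eq. Qed.

Lemma kids_wk t : kids (wk t) = wkids (tagt t) (kids t).
Proof. by case: t => s r ch; rewrite wk_eq. Qed.

Lemma lheight_wk k t : lheight_le k t -> lheight_le k (wk t).
Proof.
elim: k t => [|k IH] t.
  by rewrite /lheight_le kids_wk => ->.
rewrite /lheight_le -/lheight_le kids_wk tagt_wk size_wkids => H i Hi.
rewrite nth_wkids //.
case: (H i Hi) => [->|Hl]; first by left.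
case: (rprem _ i) => /=; first by left.
by case: (1 < i) => /=; right => //; apply: IH.
Qed.

Lemma frag_wk : forall n t t', frag_eq n t t' -> frag_eq n (wk t) (wk t').
Proof.
cofix CIH => n t t' H.
destruct H as [t t'|n s r ch ch' Hs Hseq Hf].
  exact: FragEq0.
rewrite !wk_eq.
apply: FragEqS.
- by rewrite !size_wkids.
- move=> i; rewrite size_wkids => Hi.
  rewrite !nth_wkids -?Hs //.
  move: (Hseq i Hi).
  by case: (rprem r i); case: (1 < i) => E; rewrite ?orTb ?orFb ?wkidT ?wkidF ?seqt_wk E.
- move=> i; rewrite size_wkids => Hi.
  rewrite !nth_wkids -?Hs //.
  move: (Hf i Hi).
  case: (rprem r i); case: (1 < i) => E; rewrite ?orTb ?orFb ?wkidT ?wkidF.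
  + exact E.
  + exact E.
  + exact E.
  + exact: (CIH _ _ _ E).
Qed.

Lemma nocut_wk : forall n t, no_cut n t -> no_cut n (wk t).
Proof.
cofix CIH => n t H.
destruct H as [t|n s r ch Hr Hk].
  exact: NoCut0.
rewrite !wk_eq.
apply: NoCutS; first exact Hr.
move=> i; rewrite size_wkids => Hi.
rewrite !nth_wkids //.
move: (Hk i Hi).
case: (rprem r i); case: (1 < i) => E; rewrite ?orTb ?orFb ?wkidT ?wkidF.
+ exact E.
+ exact E.
+ exact E.
+ exact: (CIH _ _ E).
Qed.

Ltac mss := apply/msetP => x; rewrite !msetE2; lia.

Lemma rule_wk r ch s : rule_inst r [seq seqt c | c <- ch] s ->
  rule_inst r [seq seqt c | c <- wkids r ch] (wseq s).
Proof.
case: r => /=.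
- case=> Hp [G [D [p ->]]].
  case: ch Hp => // _; split => //.
  exists (Pi `+` G), (D `+` Sigma), p.
  rewrite /wseq /=; congr (_, _); mss.
- case=> Hp [G [D ->]].
  case: ch Hp => // _; split => //.
  exists (Pi `+` G), (D `+` Sigma).
  rewrite /wseq /=; congr (_, _); mss.
- case=> [G [D [A [B [Hp ->]]]]].
  case: ch Hp => [|[s1 r1 k1] [|[s2 r2 k2] [|c3 rest]]] //= [-> ->].
  exists (Pi `+` G), (D `+` Sigma), A, B.
  rewrite /wseq /=; split.
    congr [:: (_, _); (_, _)]; mss.
  congr (_, _); mss.
- case=> [G [D [A [B [Hp ->]]]]].
  case: ch Hp => [|[s1 r1 k1] [|c2 rest]] //= [->].
  exists (Pi `+` G), (D `+` Sigma), A, B.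
  rewrite /wseq /=; split.
    congr [:: (_, _)]; mss.
  congr (_, _); mss.
- case=> [G [D [B [Hp ->]]]].
  case: ch Hp => [|[s1 r1 k1] [|c2 rest]] //= [->].
  exists (Pi `+` G), (D `+` Sigma), B.
  rewrite /wseq /=; split.
    congr [:: (_, _)]; mss.
  congr (_, _); mss.
- case=> [G [D [P [A [Hp ->]]]]].
  case: ch Hp => [|[s1 r1 k1] [|[s2 r2 k2] [|c3 rest]]] //= [-> ->].
  exists (Pi `+` G), (D `+` Sigma), P, A.
  rewrite /wseq /=; split.
    congr [:: (_, _); (_, _)]; mss.
  congr (_, _); mss.
- case=> [G [D [A [Hp ->]]]].
  case: ch Hp => [|[s1 r1 k1] [|[s2 r2 k2] [|c3 rest]]] //= [-> ->].
  exists (Pi `+` G), (D `+` Sigma), A.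
  rewrite /wseq /=; split.
    congr [:: (_, _); (_, _)]; mss.
  congr (_, _); mss.
Qed.

Lemma loc_wk : forall t, loc_correct t -> loc_correct (wk t).
Proof.
cofix CIH => t H.
destruct H as [s r ch Hr Hk].
rewrite wk_eq.
apply: LocCorrect; first exact: rule_wk.
move=> i; rewrite size_wkids => Hi.
rewrite nth_wkids //.
move: (Hk i Hi).
case: (rprem r i); case: (1 < i) => E; rewrite ?orTb ?orFb ?wkidT ?wkidF.
+ exact E.
+ exact E.
+ exact E.
+ exact: (CIH _ E).
Qed.

Fixpoint gbr (t : ptree) (d : nat -> nat) (k : nat) : ptree :=
  match k with
  | 0 => t
  | k'.+1 => nth dflt_tree (kids (gbr t d k')) (d k')
  end.

Lemma branch_wk t : branch_cond t -> branch_cond (wk t).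
Proof.
move=> Hb f d [Hf0 Hf].
have claim : forall k, f k = gbr t d k \/ f k = wk (gbr t d k).
  elim=> [|k IH]; first by right.
  have [Hd ->] := Hf k.
  have Eg : gbr t d k.+1 = nth dflt_tree (kids (gbr t d k)) (d k) by [].
  rewrite Eg.
  case: IH => E; rewrite E in Hd *; first by left.
  move: Hd; rewrite kids_wk size_wkids => Hd.
  rewrite nth_wkids //.
  case: (rprem _ _); case: (1 < _); rewrite ?orTb ?orFb ?wkidT ?wkidF;
    [left|left|left|right] => //.
have Htag : forall k, tagt (f k) = tagt (gbr t d k).
  by move=> k; case: (claim k) => ->; rewrite ?tagt_wk.
have Hsz : forall k, size (kids (f k)) = size (kids (gbr t d k)).
  by move=> k; case: (claim k) => ->; rewrite ?kids_wk ?size_wkids.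
have Hg : is_branch t (gbr t d) d.
  split => // k; split => //.
  by rewrite -Hsz; case: (Hf k).
move=> N; have [k [Hk Hr]] := Hb _ _ Hg N.
by exists k; rewrite Htag.
Qed.

Lemma inf_wk t : inf_proof t -> inf_proof (wk t).
Proof. by case=> H1 H2; split; [apply: loc_wk | apply: branch_wk]. Qed.

End W.

Theorem lemma5p1 (Pi Sigma : fmset) : strongly_admissible (wk_rule Pi Sigma).
Proof.
exists (wk Pi Sigma).
split; first exact: inf_wk.
split; first by move=> n pi pi' _ _; apply: frag_wk.
split; first by move=> n pi [H1 H2]; split; [apply: inf_wk | apply: nocut_wk].
split; first by move=> pi _ k; apply: lheight_wk.
move=> prem concl pi [G [D [-> ->]]] _ Hs.
by rewrite seqt_wk Hs.
Qed.
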